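(* Fix reals $a<b$ with $\tau_0\notin[a,b]$, $S=T\cap[a,b]$, $m\ge1$, points $q_1,\ldots,q_r\in\mathbf M$, a subset $\mathbf\Pi\subseteq\mathbf M$ and pairwise disjoint sets $\Pi_1,\ldots,\Pi_d\subseteq\mathbf M$ with $\mathbf\Pi\subseteq\Pi_1\cup\cdots\cup\Pi_d$. Suppose reals $\alpha_{ij}\le\beta_{ij}$ ($1\le i\le r$, $1\le j\le d$) satisfy $\alpha_{ij}\le\tau(q_i,q)\le\beta_{ij}$ for all $q\in\Pi_j$, and reals $a_{ij}\le b_{ij}$ ($1\le i\le j\le d$) satisfy $\tau(u,v)\in[a_{ij},b_{ij}]$ whenever $u\in\Pi_i$, $v\in\Pi_j$, $u\ne v$, $\tau(u,v)\in[a,b]$. Let $\mathcal A$ be any set of constraints satisfied by the tuple $(x_{ij}^{(k)}(C),y_{ij}^{(k)}(C))$ of every $S$-code $C\subset\mathbf\Pi$. Let $c^*$ be the supremum of $c_1+\cdots+c_d$ over real variables $c_j$, $x_{ij}^{(k)}$ ($1\le i\le j\le d$, with $x_{ji}^{(k)}:=x_{ij}^{(k)}$), $y_{ij}^{(k)}$ ($1\le i\le r$, $1\le j\le d$), $k=0,\ldots,2m-1$, subject to: (11) for each $k=0,\ldots,2m-1$ the symmetric $(r+d)\times(r+d)$ matrix $\Gamma_k$ with entries $\Phi_k(\tau(q_i,q_{i'}))$ in position $(i,i')$ ($i,i'\le r$), $\sum_{l=0}^k p_{kl}y_{ij}^{(l)}$ in positions $(i,r+j)$ and $(r+j,i)$,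 and $\sum_{l=0}^k p_{kl}x_{jj'}^{(l)}$ in position $(r+j,r+j')$, is positive semidefinite; (13) $H_m(y_{ij}^{(0)},\ldots,y_{ij}^{(2m-1)},[\alpha_{ij},\beta_{ij}])\succeq0$ for all $i\le r$, $j\le d$; (14) $H_m(x_{ij}^{(0)},\ldots,x_{ij}^{(2m-1)},[a_{ij},b_{ij}])\succeq0$ for $1\le i<j\le d$; (15) $H_m(z_{0,i},\ldots,z_{2m-1,i},[a_{ii},b_{ii}])\succeq0$ for $i=1,\ldots,d$, where $z_{k,i}:=x_{ii}^{(k)}-c_i\tau_0^k$ for $k\ge1$ and $z_{0,i}:=x_{ii}^{(0)}-c_i$; (16) the constraints $\mathcal A$; (17) $y_{ij}^{(0)}=c_j\ge0$ for all $i,j$, and the $(d+1)\times(d+1)$ matrix $\begin{pmatrix}1&c^{T}\\ c&(x_{ij}^{(0)})_{i,j=1}^d\end{pmatrix}$, $c=(c_1,\ldots,c_d)^T$, is positive semidefinite. Then $A(\mathbf\Pi,S)\le c^*$.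
   Context: $\mathbf M$ is a 2-point-homogeneous space with associated real function $\tau(x,y)$, $\tau_0:=\tau(x,x)$, $T=\{\tau(x,y):x,y\in\mathbf M\}$, and zonal spherical functions $\Phi_k(t)=\sum_{l=0}^k p_{kl}t^l$ assumed to be real polynomials of degree $k$ with $\Phi_k(\tau_0)=1$ such that for every finite $\{x_1,\ldots,x_N\}\subset\mathbf M$ and $k\ge0$ the matrix $(\Phi_k(\tau(x_i,x_j)))$ is positive semidefinite. An $S$-code is a finite $C\subset\mathbf M$ with $\tau(x,y)\in S$ for all distinct $x,y\in C$; $A(\mathbf\Pi,S)$ is the largest cardinality of an $S$-code contained in $\mathbf\Pi$. For an $S$-code $C\subset\mathbf\Pi$ and $C_j:=C\cap\Pi_j$: $x_{ij}^{(k)}(C)=\sum_{u\in C_i}\sum_{v\in C_j}\tau(u,v)^k$ (including $u=v$ when $i=j$) and $y_{ij}^{(k)}(C)=\sum_{q\in C_j}\tau(q_i,q)^k$, with $\tau^0:=1$. For reals $s_0,\ldots,s_{2m-1}$ and $\alpha\le\beta$: $R_m=(s_{i+j-2})_{i,j=1}^m$, $F_m^+(\alpha)=(s_{i+j-1}-\alpha s_{i+j-2})$, $F_m^-(\beta)=(\beta s_{i+j-2}-s_{i+j-1})$, $H_m(s_0,\ldots,s_{2m-1},[\alpha,\beta])=\operatorname{diag}(R_m,F_m^+(\alpha),F_m^-(\beta))$. *)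

(* Defs.v *)
From HB Require Import structures.
From mathcomp Require Import all_boot all_order all_algebra.
From mathcomp Require Import boolp classical_sets reals constructive_ereal ereal.

Set Implicit Arguments.
Unset Strict Implicit.
Unset Printing Implicit Defensive.

Import Order.TTheory GRing.Theory Num.Theory.
Local Open Scope ring_scope.
Local Open Scope classical_set_scope.

Section Defs.
Variable R : realType.

Definition psd (n : nat) (A : 'M[R]_n) : Prop :=
  A^T = A /\ forall v : 'cV[R]_n, 0 <= (v^T *m A *m v) 0 0.

(* H_m(s_0,...,s_{2m-1},[al,be]) = diag(R_m, F_m^+(al), F_m^-(be));
   0-indexed: (R_m)_{ij} = s_(i+j), etc. *)
Definition Hankel_R (m : nat) (s : nat -> R) : 'M[R]_m :=
  \matrix_(i < m, j < m) s (i + j)%N.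
Definition Hankel_Fp (m : nat) (s : nat -> R) (al : R) : 'M[R]_m :=
  \matrix_(i < m, j < m) (s (i + j).+1 - al * s (i + j)%N).
Definition Hankel_Fm (m : nat) (s : nat -> R) (be : R) : 'M[R]_m :=
  \matrix_(i < m, j < m) (be * s (i + j)%N - s (i + j).+1).
Definition Hm (m : nat) (s : nat -> R) (al be : R) : 'M[R]_(m + (m + m)) :=
  block_mx (Hankel_R m s) 0 0 (block_mx (Hankel_Fp m s al) 0 0 (Hankel_Fm m s be)).

Variable M : choiceType.
Variable tau : M -> M -> R.

Definition S_of (a b : R) : set R :=
  range (fun p : M * M => tau p.1 p.2) `&` [set t | a <= t <= b].

Definition is_code (S : set R) (C : seq M) : Prop :=
  uniq C /\ forall u v, u \in C -> v \in C -> u != v -> S (tau u v).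

Definition A_code (Pi : set M) (S : set R) : \bar R :=
  ereal_sup [set ((size C)%:R)%:E | C in [set C : seq M | is_code S C /\
                                        forall u, u \in C -> Pi u]].

Definition xC (d : nat) (Pis : 'I_d -> set M) (C : seq M) (k : nat) (i j : 'I_d) : R :=
  \sum_(u <- C | u \in Pis i) \sum_(v <- C | v \in Pis j) tau u v ^+ k.
Definition yC (r d : nat) (q : 'I_r -> M) (Pis : 'I_d -> set M) (C : seq M)
    (k : nat) (i : 'I_r) (j : 'I_d) : R :=
  \sum_(v <- C | v \in Pis j) tau (q i) v ^+ k.

(* Gamma_k of constraint (11); Phi k is the zonal polynomial, p_kl = (Phi k)`_l *)
Definition Gamma (r d : nat) (q : 'I_r -> M) (Phi : nat -> {poly R}) (k : nat)
    (x : nat -> 'I_d -> 'I_d -> R) (y : nat -> 'I_r -> 'I_d -> R) : 'M[R]_(r + d) :=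
  block_mx (\matrix_(i < r, i' < r) (Phi k).[tau (q i) (q i')])
           (\matrix_(i < r, j < d) \sum_(l < k.+1) (Phi k)`_l * y l i j)
           (\matrix_(j < d, i < r) \sum_(l < k.+1) (Phi k)`_l * y l i j)
           (\matrix_(j < d, j' < d) \sum_(l < k.+1) (Phi k)`_l * x l j j').

(* Feasible set of the SDP (11),(13)-(17). Variables are indexed by all k : nat;
   only k <= 2m-1 enter (11),(13)-(15). x is symmetric: x_{ji} := x_{ij}. *)
Definition feasible (m r d : nat) (q : 'I_r -> M) (Phi : nat -> {poly R}) (tau0 : R)
    (al be : 'I_r -> 'I_d -> R) (aa bb : 'I_d -> 'I_d -> R)
    (Acons : (nat -> 'I_d -> 'I_d -> R) -> (nat -> 'I_r -> 'I_d -> R) -> Prop)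
    (c : 'I_d -> R) (x : nat -> 'I_d -> 'I_d -> R) (y : nat -> 'I_r -> 'I_d -> R) : Prop :=
  (forall k i j, x k i j = x k j i) /\
      (forall k, (k < 2 * m)%N -> psd (Gamma q Phi k x y)) /\
      (forall i j, psd (Hm m (fun k => y k i j) (al i j) (be i j))) /\
      (forall i j : 'I_d, (i < j)%N -> psd (Hm m (fun k => x k i j) (aa i j) (bb i j))) /\
      (forall i : 'I_d, psd (Hm m (fun k => x k i i - c i * tau0 ^+ k) (aa i i) (bb i i))) /\
      Acons x y /\
      [/\ (forall i j, y 0%N i j = c j), (forall j, 0 <= c j) &
          psd (block_mx (1 : 'M[R]_1) (\row_(j < d) c j) (\col_(i < d) c i)
                        (\matrix_(i < d, j < d) x 0%N i j))].

Definition c_star (m r d : nat) (q : 'I_r -> M) (Phi : nat -> {poly R}) (tau0 : R)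
    (al be : 'I_r -> 'I_d -> R) (aa bb : 'I_d -> 'I_d -> R)
    (Acons : (nat -> 'I_d -> 'I_d -> R) -> (nat -> 'I_r -> 'I_d -> R) -> Prop) : \bar R :=
  ereal_sup [set (\sum_(j < d) c j)%:E | c in
     [set c : 'I_d -> R | exists x y, feasible m q Phi tau0 al be aa bb Acons c x y]].

End Defs.

(* Main.v *)
Require Import Defs.
From HB Require Import structures.
From mathcomp Require Import all_boot all_order all_algebra.
From mathcomp Require Import boolp classical_sets reals constructive_ereal ereal.
From mathcomp Require Import ring.
Import Order.TTheory GRing.Theory Num.Theory.
Local Open Scope ring_scope.
Local Open Scope classical_set_scope.


Section PSD.
Variable R : realType.

Lemma psd0 n : psd (0 : 'M[R]_n).
Proof.
split; first by rewrite trmx0.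
by move=> v; rewrite mulmx0 mul0mx mxE.
Qed.

Lemma psdD n (A B : 'M[R]_n) : psd A -> psd B -> psd (A + B).
Proof.
move=> [tA qA] [tB qB]; split; first by rewrite linearD /= tA tB.
by move=> v; rewrite mulmxDr mulmxDl mxE addr_ge0.
Qed.

Lemma psd_sum (I : Type) (s : seq I) (P : pred I) n (F : I -> 'M[R]_n) :
  (forall i, P i -> psd (F i)) -> psd (\sum_(i <- s | P i) F i).
Proof.
move=> H; apply: (big_ind (@psd R n)); [exact: psd0 | exact: psdD | exact: H].
Qed.

Lemma psd_rank1 n (c : R) (w : 'cV[R]_n) : 0 <= c -> psd (c *: (w *m w^T)).
Proof.
move=> c0; split.
  by rewrite linearZ /= trmx_mul trmxK.
move=> v.
rewrite -scalemxAr -scalemxAl mxE mulr_ge0 //.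
rewrite mulmxA -[v^T *m w *m w^T *m v]mulmxA.
idtac.
have -> : w^T *m v = (v^T *m w)^T by rewrite trmx_mul trmxK.
rewrite mxE big_ord1.

rewrite [X in _ * X]mxE.
have sq (x : R) : 0 <= x * x by rewrite -expr2 sqr_ge0.
exact: sq.
Qed.

Lemma psd_block n1 n2 (A : 'M[R]_n1) (B : 'M[R]_n2) :
  psd A -> psd B -> psd (block_mx A 0 0 B).
Proof.
move=> [tA qA] [tB qB]; split.
  by rewrite tr_block_mx tA tB !trmx0.
move=> v; rewrite -[v]vsubmxK tr_col_mx mul_row_block !mulmx0 addr0 add0r.
by rewrite mul_row_col mxE addr_ge0.
Qed.

Lemma psd_congr n1 n2 (A : 'M[R]_(n1, n2)) (G : 'M[R]_n1) :
  psd G -> psd (A^T *m G *m A).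
Proof.
move=> [tG qG]; split.
  by rewrite !trmx_mul trmxK tG mulmxA.
move=> v.
have -> : v^T *m (A^T *m G *m A) *m v = (A *m v)^T *m G *m (A *m v).
  by rewrite trmx_mul !mulmxA.
exact: qG.
Qed.

End PSD.


Section HM.
Variable R : realType.

Lemma Hm0 m (al be : R) : Hm m (fun _ => 0) al be = 0.
Proof.
rewrite /Hm.
have -> : Hankel_R m (fun _ => 0 : R) = 0 by apply/matrixP=> i j; rewrite !mxE.
have -> : Hankel_Fp m (fun _ => 0 : R) al = 0 by apply/matrixP=> i j; rewrite !mxE mulr0 subr0.
have -> : Hankel_Fm m (fun _ => 0 : R) be = 0 by apply/matrixP=> i j; rewrite !mxE mulr0 subr0.
apply/matrixP=> i j; rewrite !mxE; case: (split i) => ?; rewrite !mxE; case: (split j) => ?; rewrite !mxE //.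
  by case: split => ?; rewrite !mxE; case: split => ?; rewrite !mxE.
Qed.

Lemma HmD m (f g : nat -> R) (al be : R) :
  Hm m (fun k => f k + g k) al be = Hm m f al be + Hm m g al be.
Proof.
rewrite /Hm !add_block_mx !addr0.
have -> : Hankel_R m (fun k => f k + g k) = Hankel_R m f + Hankel_R m g
  by apply/matrixP=> i j; rewrite !mxE.
have -> : Hankel_Fp m (fun k => f k + g k) al = Hankel_Fp m f al + Hankel_Fp m g al
  by apply/matrixP=> i j; rewrite !mxE; ring.
have -> : Hankel_Fm m (fun k => f k + g k) be = Hankel_Fm m f be + Hankel_Fm m g be
  by apply/matrixP=> i j; rewrite !mxE; ring.
by [].
Qed.

Lemma Hm_sum (I : Type) (s : seq I) (P : pred I) (f : I -> nat -> R) m al be :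
  Hm m (fun k => \sum_(x <- s | P x) f x k) al be =
  \sum_(x <- s | P x) Hm m (f x) al be.
Proof.
elim: s => [|x s IH].
  rewrite big_nil -(Hm0 m al be); congr Hm; apply: funext => k; exact: big_nil.
rewrite big_cons; case: ifP => Px.
  rewrite -IH -HmD; congr Hm; apply: funext => k; by rewrite big_cons Px.
rewrite -IH; congr Hm; apply: funext => k; by rewrite big_cons Px.
Qed.

Lemma Hm_moment m (al be t : R) : al <= t <= be ->
  psd (Hm m (fun k => t ^+ k) al be).
Proof.
move=> /andP[h1 h2].
pose w : 'cV[R]_m := \col_(i < m) t ^+ i.
have E : forall c (A : 'M[R]_m), (forall i j : 'I_m, A i j = c * t ^+ (i + j)) ->
   A = c *: (w *m w^T).
  move=> c A HF; apply/matrixP=> i j; rewrite !mxE big_ord1 !mxE HF exprD //.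
apply: psd_block.
  rewrite (E 1 (Hankel_R m _)); first by apply: psd_rank1; exact: ler01.
  by move=> i j; rewrite mxE mul1r.
apply: psd_block.
  rewrite (E (t - al) (Hankel_Fp m _ al)); first by apply: psd_rank1; rewrite subr_ge0.
  by move=> i j; rewrite mxE exprS; ring.
rewrite (E (be - t) (Hankel_Fm m _ be)); first by apply: psd_rank1; rewrite subr_ge0.
by move=> i j; rewrite mxE exprS; ring.
Qed.


Lemma Hm_psd_sum (I : Type) (s : seq I) (P : pred I) (F : I -> R) m al be :
  (forall x, P x -> al <= F x <= be) ->
  psd (Hm m (fun k => \sum_(x <- s | P x) F x ^+ k) al be).
Proof.
move=> H; rewrite (@Hm_sum _ s P (fun x k => F x ^+ k)).
apply: psd_sum => x Px; exact: Hm_moment (H x Px).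
Qed.

Lemma Hm_psd_sum2 (I J : Type) (s : seq I) (P : pred I) (t : seq J) (Q : I -> pred J)
  (F : I -> J -> R) m al be :
  (forall x y, P x -> Q x y -> al <= F x y <= be) ->
  psd (Hm m (fun k => \sum_(x <- s | P x) \sum_(y <- t | Q x y) F x y ^+ k) al be).
Proof.
move=> H; rewrite (@Hm_sum _ s P (fun x k => \sum_(y <- t | Q x y) F x y ^+ k)).
apply: psd_sum => x Px; exact: Hm_psd_sum (fun y => H x y Px).
Qed.

End HM.

Section Extra.
Variable R : realType.

Lemma Hm_psd_sumS (I : eqType) (s : seq I) (P : pred I) (F : I -> R) m al be :
  (forall x, x \in s -> P x -> al <= F x <= be) ->
  psd (Hm m (fun k => \sum_(x <- s | P x) F x ^+ k) al be).
Proof.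
move=> H.
have -> : (fun k => \sum_(x <- s | P x) F x ^+ k) =
          (fun k => \sum_(x <- s | (x \in s) && P x) F x ^+ k).
  by apply: funext => k; rewrite big_seq_cond.
by apply: Hm_psd_sum => x /andP[]; exact: H.
Qed.

Lemma Hm_psd_sum2S (I J : eqType) (s : seq I) (P : pred I) (t : seq J) (Q : I -> pred J)
  (F : I -> J -> R) m al be :
  (forall x y, x \in s -> y \in t -> P x -> Q x y -> al <= F x y <= be) ->
  psd (Hm m (fun k => \sum_(x <- s | P x) \sum_(y <- t | Q x y) F x y ^+ k) al be).
Proof.
move=> H.
have -> : (fun k => \sum_(x <- s | P x) \sum_(y <- t | Q x y) F x y ^+ k) =
          (fun k => \sum_(x <- s | (x \in s) && P x) \sum_(y <- t | (y \in t) && Q x y) F x y ^+ k).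
  apply: funext => k; rewrite big_seq_cond; apply: eq_bigr => x _.
  by rewrite big_seq_cond.
apply: Hm_psd_sum2 => x y /andP[xs Px] /andP[yt Qy]; exact: H.
Qed.

End Extra.

Theorem theorem7p3 (R : realType) (M : choiceType) (tau : M -> M -> R) (tau0 : R)
  (Phi : nat -> {poly R})
  (* standing assumptions on the 2-point-homogeneous space *)
  (htau0 : forall u, tau u u = tau0)
  (htau_sym : forall u v, tau u v = tau v u)
  (hPhi_deg : forall k, size (Phi k) = k.+1)
  (hPhi_1 : forall k, (Phi k).[tau0] = 1)
  (hPhi_psd : forall (k N : nat) (pts : 'I_N -> M),
      psd (\matrix_(i < N, j < N) (Phi k).[tau (pts i) (pts j)]))
  (* data of the theorem *)
  (a b : R) (hab : a < b) (htau0ab : ~ (a <= tau0 <= b))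
  (m : nat) (hm : (1 <= m)%N)
  (r : nat) (q : 'I_r -> M)
  (Pi : set M) (d : nat) (Pis : 'I_d -> set M)
  (hdisj : forall i j : 'I_d, i != j -> Pis i `&` Pis j = set0)
  (hcover : Pi `<=` \bigcup_(j in [set: 'I_d]) Pis j)
  (al be : 'I_r -> 'I_d -> R)
  (halbe : forall i j, al i j <= be i j)
  (hy_bnd : forall i j u, Pis j u -> al i j <= tau (q i) u <= be i j)
  (aa bb : 'I_d -> 'I_d -> R)
  (haabb : forall i j : 'I_d, (i <= j)%N -> aa i j <= bb i j)
  (hx_bnd : forall (i j : 'I_d) u v, (i <= j)%N -> Pis i u -> Pis j v -> u <> v ->
      a <= tau u v <= b -> aa i j <= tau u v <= bb i j)
  (Acons : (nat -> 'I_d -> 'I_d -> R) -> (nat -> 'I_r -> 'I_d -> R) -> Prop)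
  (hA : forall C : seq M,
      is_code tau (S_of tau a b) C ->
      (forall u, u \in C -> Pi u) ->
      Acons (xC tau Pis C) (yC tau q Pis C)) :
  (A_code tau Pi (S_of tau a b)
   <= c_star tau m q Phi tau0 al be aa bb Acons)%E.

Proof.
have sum1 : forall s : seq M, \sum_(v <- s) (1 : R) = (size s)%:R.
  by elim=> [|x s IH]; rewrite ?big_nil ?big_cons ?IH //= -add1n natrD.
apply: ge_ereal_sup => _ [C [hC hCPi] <-].
pose c := fun j : 'I_d => \sum_(v <- C | v \in Pis j) (1 : R).
have size_eq : (size C)%:R = \sum_(j < d) c j.
  rewrite /c; under eq_bigr => j _ do rewrite big_mkcond.
  rewrite exchange_big /= -sum1 big_seq [RHS]big_seq.
  apply: eq_bigr => v vC.
  have [j0 _ Pj0] := hcover v (hCPi v vC).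
  have vj0 : v \in Pis j0 by rewrite in_setE.
  rewrite (bigD1 j0) //= vj0 big1 ?addr0 // => j /negbTE nj.
  case: ifP => // ; rewrite in_setE => vj'.
  have := hdisj j j0; rewrite nj => /(_ isT) E.
  have : (Pis j `&` Pis j0) v by split.
  by rewrite E.
apply: ereal_sup_ubound; exists c; last by rewrite size_eq.
exists (xC tau Pis C), (yC tau q Pis C).
split; [|split;[|split;[|split;[|split;[|split]]]]].
- move=> k i j; rewrite /xC exchange_big; apply: eq_bigr => u _.
  by apply: eq_bigr => v _; rewrite htau_sym.
- move=> k _.
  pose n := size C.
  pose T := in_tuple C.
  pose pts : 'I_(r + n) -> M := fun i => match split i with inl a => q a | inr b => tnth T b end.
  have ptsL : forall i, pts (lshift n i) = q i.
    by move=> i; rewrite /pts; have /= -> := @unsplitK r n (inl i).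
  have ptsR : forall l, pts (rshift r l) = tnth T l.
    by move=> l; rewrite /pts; have /= -> := @unsplitK r n (inr l).
  pose G := \matrix_(i, j) (Phi k).[tau (pts i) (pts j)].
  pose B : 'M[R]_(n, d) := \matrix_(l, j) ((tnth T l \in Pis j)%:R).
  pose P : 'M[R]_(r + n, r + d) := block_mx 1%:M 0 0 B.
  have hD : forall (I : Type) (s : seq I) (Q : pred I) (f : I -> nat -> R),
      \sum_(l < k.+1) (Phi k)`_l * \sum_(u <- s | Q u) f u l =
      \sum_(u <- s | Q u) \sum_(l < k.+1) (Phi k)`_l * f u l.
    move=> I s Q f; under eq_bigr => l _ do rewrite big_distrr.
    by rewrite exchange_big.
  have hH : forall z, \sum_(l < k.+1) (Phi k)`_l * z ^+ l = (Phi k).[z].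
    by move=> z; rewrite horner_coef hPhi_deg.
  have hB : forall j (F : M -> R), \sum_(v <- C | v \in Pis j) F v =
      \sum_(l < n) F (tnth T l) * (tnth T l \in Pis j)%:R.
    move=> j F; rewrite big_tnth big_mkcond; apply: eq_bigr => l _.
    by case: ifP => _; rewrite ?mulr1 ?mulr0.
  have -> : Gamma tau q Phi k (xC tau Pis C) (yC tau q Pis C) = P^T *m G *m P.
    rewrite /P tr_block_mx !trmx0 trmx1 -[G]submxK !mulmx_block.
    rewrite !mul1mx !mul0mx !mulmx0 !addr0 !add0r !mulmx1.
    rewrite /Gamma; congr block_mx.
    - by apply/matrixP => i j; rewrite !mxE !ptsL.
    - apply/matrixP => i j; rewrite !mxE /yC (hD _ C _ (fun v l => tau (q i) v ^+ l)).
      under eq_bigr => v _ do rewrite hH.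
      rewrite hB; apply: eq_bigr => l _; by rewrite !mxE ptsL ptsR.
    - apply/matrixP => j i; rewrite !mxE /yC (hD _ C _ (fun v l => tau (q i) v ^+ l)).
      under eq_bigr => v _ do rewrite hH.
      rewrite hB; apply: eq_bigr => l _; by rewrite !mxE ptsL ptsR htau_sym mulrC.
    - apply/matrixP => j j'; rewrite !mxE /xC.
      rewrite (hD _ C _ (fun u l => \sum_(v <- C | v \in Pis j') tau u v ^+ l)).
      under eq_bigr => u _ do rewrite (hD _ C _ (fun v l => tau u v ^+ l)).
      under eq_bigr => u _ do under eq_bigr => v _ do rewrite hH.
      rewrite hB.
      under eq_bigr => l1 _ do rewrite hB big_distrl.
      under [RHS]eq_bigr => l2 _ do rewrite !mxE big_distrl.
      rewrite [RHS]exchange_big; apply: eq_bigr => l1 _; apply: eq_bigr => l2 _.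
      rewrite !mxE ptsR ptsR /=; rewrite mulrAC; congr (_ * _); exact: mulrC.
  exact: psd_congr (hPhi_psd k (r + n) pts).

- move=> i j; rewrite /yC; apply: Hm_psd_sumS => v _; rewrite in_setE.
  exact: hy_bnd.
- move=> i j ij; rewrite /xC; apply: Hm_psd_sum2S => u v uC vC; rewrite !in_setE => Pu Pv.
  have uv : u <> v.
    move=> E; subst v.
    have : (Pis i `&` Pis j) u by split.
    by rewrite hdisj // neq_ltn ij.
  apply: hx_bnd => //; first exact: ltnW.
  have [_ hS] := hC; have [_ /=] := hS u v uC vC (introN eqP uv).
  done.
- move=> i.
  have -> : (fun k => xC tau Pis C k i i - c i * tau0 ^+ k) =
     (fun k => \sum_(u <- C | u \in Pis i) \sum_(v <- C | (v \in Pis i) && (v != u)) tau u v ^+ k).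
    apply: funext => k; rewrite /xC /c big_distrl /= -sumrB big_seq_cond [RHS]big_seq_cond.
    apply: eq_bigr => u /andP[uC ui].
    have [uniqC _] := hC.
    rewrite big_mkcond (bigD1_seq u) //= ui htau0 mul1r addrC addrK.
    rewrite [RHS]big_mkcond [LHS]big_mkcond; apply: eq_bigr => v _.
    by case: (v \in Pis i); case: (v != u).
  apply: Hm_psd_sum2S => u v uC vC; rewrite !in_setE => Pu /andP[]; rewrite in_setE => Pv nvu.
  apply: hx_bnd => //.
    by move=> E; rewrite E eqxx in nvu.
  have [_ hS] := hC; have := hS u v uC vC; rewrite eq_sym => /(_ nvu) [_ /=].
  done.
- exact: hA.
- split.
  + by move=> i j; rewrite /yC /c; apply: eq_bigr => v _; rewrite expr0.
  + by move=> j; rewrite /c; apply: sumr_ge0 => v _; exact: ler01.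
  + pose w : 'cV[R]_(1 + d) := col_mx (1 : 'M[R]_1) (\col_(i < d) c i).
    have -> : block_mx (1 : 'M[R]_1) (\row_(j < d) c j) (\col_(i < d) c i)
                        (\matrix_(i < d, j < d) xC tau Pis C 0%N i j) = 1 *: (w *m w^T).
      rewrite scale1r /w tr_col_mx mul_col_row trmx1.
      congr block_mx.
      - by rewrite -[LHS]mulmx1.
      - by rewrite -[1]/(1%:M : 'M[R]_1) mul1mx; apply/matrixP => i j; rewrite !mxE.
      - by rewrite mulmx1.
      apply/matrixP => i j; rewrite !mxE big_ord1 !mxE /xC /c big_distrl /=.
      apply: eq_bigr => u _; rewrite mul1r; apply: eq_bigr => v _; by rewrite expr0.
    by apply: psd_rank1; exact: ler01.
Qed.
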